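(* Under the standing setting (including the assumptions on $a$) and the absorbing-state assumptions (i)–(iv) in the context, there exist $K,c_1>0$, independent of $\mathbf{x}\in\mathbb{R}^N$, $\mathbf{v}\in\chi$, $\lambda>0$ and $t>0$, such that $$\|\mu_t^{\lambda,\mathbf{x},\mathbf{v}}-\tilde\mu_\infty^{\mathbf{x},\mathbf{v}}\|_{TV}\le Ke^{-c_1t\lambda}+Kt.$$
   Context: Let $N\ge1$, $\chi$ a finite set, $a:\mathbb{R}^N\times\chi\to\mathbb{R}^N$ with $a(\cdot,\mathbf{v})$ continuous and bounded for every $\mathbf{v}$ (we additionally assume $a(\cdot,\mathbf{v})$ globally Lipschitz so that all ODEs are well posed), and $\{\mathcal{P}_{\mathbf{x}}\}_{\mathbf{x}\in\mathbb{R}^N}$ a family of transition matrices on $\chi$. For $\lambda>0$, the fully coupled process $(X_t^{\lambda,\mathbf{x},\mathbf{v}},V_t^{\lambda,\mathbf{x},\mathbf{v}})$ on $\mathbb{R}^N\times\chi$ starts at $(\mathbf{x},\mathbf{v})$; $X$ is continuous and solves $\frac{d}{dt}X_t=a(X_t,V_t)$; $V$ is càdlàg, constant between rings of a Poisson clock of rate $\lambda$, and at a ring at time $s$ jumps from $V_{s-}$ to $\mathbf{v}'$ with probability $\mathcal{P}_{X_s}(V_{s-},\mathbf{v}')$. $\mu_t^{\lambda,\mathbf{x},\mathbf{v}}$ is the law of $V_t^{\lambda,\mathbf{x},\mathbf{v}}$. $\tilde V_k^{\mathbf{x},\mathbf{v}}$ is the discrete-time chain with transition matrix $\mathcal{P}_{\mathbf{x}}$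 started at $\mathbf{v}$. Absorbing-state assumptions: there are distinct states $\mathbf{e}^{(1)},\dots,\mathbf{e}^{(L)}\in\chi$ such that (i) each $\mathcal{P}_{\mathbf{x}}$ is stochastic; (ii) $\mathcal{P}_{\mathbf{x}}(\mathbf{e}^{(i)},\mathbf{e}^{(i)})=1$ for all $i,\mathbf{x}$; (iii) there exist $\tilde n\ge1$ and $z_0<1$ with $\mathbb{P}[\tilde V_{\tilde n}^{\mathbf{x},\mathbf{v}}\notin\{\mathbf{e}^{(1)},\dots,\mathbf{e}^{(L)}\}]\le z_0$ for all $\mathbf{x},\mathbf{v}$; (iv) there is $K_0>0$ with $\sum_{\mathbf{v}'}|\mathcal{P}_{\mathbf{x}}(\mathbf{v},\mathbf{v}')-\mathcal{P}_{\mathbf{x}'}(\mathbf{v},\mathbf{v}')|\le K_0\|\mathbf{x}-\mathbf{x}'\|_1$, $\|\mathbf{w}\|_1=\sum_i|w_i|$. $q^i(\mathbf{x},\mathbf{v})$ is the probability that the chain with transition matrix $\mathcal{P}_{\mathbf{x}}$ started at $\mathbf{v}$ is absorbed in $\mathbf{e}^{(i)}$; $\tilde\mu_\infty^{\mathbf{x},\mathbf{v}}$ is the probability measure on $\chi$ with mass $q^i(\mathbf{x},\mathbf{v})$ at $\mathbf{e}^{(i)}$, $1\le i\le L$, and $0$ elsewhere. $\|\mu\|_{TV}:=\sum_{\mathbf{v}'\in\chi}|\mu(\mathbf{v}')|$. *)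

(* Defs.v *)
From mathcomp Require Import all_boot all_order all_algebra.
From mathcomp Require Import all_classical all_reals all_analysis.
Set Implicit Arguments. Unset Strict Implicit. Unset Printing Implicit Defensive.
Import Order.TTheory GRing.Theory Num.Theory.
Import numFieldNormedType.Exports.
Local Open Scope classical_set_scope.
Local Open Scope ring_scope.

Section Defs.
Variables (R : realType) (N : nat) (chi : finType).

Definition norm1 (w : 'rV[R]_N) : R := \sum_(i < N) `|w ord0 i|.

Definition stochastic (P : 'rV[R]_N -> chi -> chi -> R) : Prop :=
  forall x v, (forall w, 0 <= P x v w) /\ \sum_(w : chi) P x v w = 1.

(* k-step transition probabilities of the discrete chain with matrix P_x:
   nstep P x k v w = P[ tildeV_k^{x,v} = w ] *)
Fixpoint nstep (P : 'rV[R]_N -> chi -> chi -> R) (x : 'rV[R]_N) (k : nat)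
  (v w : chi) : R :=
  match k with
  | 0 => (v == w)%:R
  | k'.+1 => \sum_(u : chi) P x v u * nstep P x k' u w
  end.

(* absorption probability q^e(x,v) in the absorbing state e:
   P[exists k, tildeV_k = e] = lim_k P[tildeV_k = e] (e absorbing) *)
Definition absorb_prob P x v (e : chi) : R := lim ((fun k => nstep P x k v e) @ \oo).

Definition mu_infty P (E : {set chi}) x v (w : chi) : R :=
  if w \in E then absorb_prob P x v w else 0.

(* Contribution to P[V_t = w] of the paths with exactly n rings of the
   Poisson clock in (tau, t], given that at time tau the process is at
   (y, u).  Between rings X follows the flow of a(., u), here given by
   flow u s y (the position after time s started from y).  The first ring
   after tau has density lam * exp(-lam (s - tau)); at a ring at time s the
   state jumps from u to u' with probability P_{X_s}(u, u'). *)
Fixpoint path_term (P : 'rV[R]_N -> chi -> chi -> R)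
  (flow : chi -> R -> 'rV[R]_N -> 'rV[R]_N) (lam t : R) (w : chi) (n : nat)
  : R -> 'rV[R]_N -> chi -> R :=
  match n with
  | 0 => fun tau _ u => expR (- lam * (t - tau)) * (u == w)%:R
  | n'.+1 => fun tau y u =>
      Rintegral lebesgue_measure `[tau, t]
        (fun s => lam * expR (- lam * (s - tau)) *
           \sum_(u' : chi) P (flow u (s - tau) y) u u' *
              path_term P flow lam t w n' s (flow u (s - tau) y) u')
  end.

Definition mu_t P flow (lam t : R) (x : 'rV[R]_N) (v w : chi) : R :=
  lim ((series (fun n => path_term P flow lam t w n 0 x v)) @ \oo).

Definition TV_dist (mu nu : chi -> R) : R := \sum_(w : chi) `|mu w - nu w|.

End Defs.

(* Main.v *)
Require Import Defs.
From mathcomp Require Import all_boot all_order all_algebra.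
From mathcomp Require Import all_classical all_reals all_analysis.
From mathcomp Require Import ring lra.
Import Order.TTheory GRing.Theory Num.Theory.
Import numFieldNormedType.Exports.
Local Open Scope classical_set_scope.
Local Open Scope ring_scope.
Set Implicit Arguments. Unset Strict Implicit.
Lemma sum_delta (R : realType) (chi : finType) (f : chi -> R) u :
  \sum_(u' : chi) (u == u')%:R * f u' = f u.
Proof.
rewrite (bigD1 u) //= eqxx mul1r big1 ?addr0 // => i /negbTE.
by rewrite eq_sym => ->; rewrite mul0r.
Qed.

Lemma sum_delta_r (R : realType) (chi : finType) (f : chi -> R) u :
  \sum_(u' : chi) f u' * (u' == u)%:R = f u.
Proof.
rewrite (bigD1 u) //= eqxx mulr1 big1 ?addr0 // => i /negbTE ->.
by rewrite mulr0.
Qed.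

Section Chain.
Variables (R : realType) (N : nat) (chi : finType).
Variables (P : 'rV[R]_N -> chi -> chi -> R) (E : {set chi}).
Hypothesis Pst : stochastic P.
Hypothesis Pabs : forall e x, e \in E -> P x e e = 1.

Lemma P_abs_row y e u : e \in E -> P y e u = (e == u)%:R.
Proof.
move=> eE; have [P0 P1] := Pst y e.
case: (eqVneq e u) => [<-|neq]; first by rewrite Pabs.
rewrite (bigD1 e) //= Pabs // in P1.
have S0 : \sum_(i | i != e) P y e i = 0 by lra.
by apply: (psumr_eq0P (fun i _ => P0 i) S0); rewrite eq_sym.
Qed.

Variable x : 'rV[R]_N.
Local Notation ns := (nstep P x).

Lemma ns_ge0 k u w : 0 <= ns k u w.
Proof.
elim: k u => [|k IH] u /=; first by rewrite ler0n.
by apply: sumr_ge0 => i _; apply: mulr_ge0; [case: (Pst x u) => ->|].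
Qed.

Lemma ns_sum1 k u : \sum_w ns k u w = 1.
Proof.
elim: k u => [|k IH] u /=.
  by rewrite -[RHS](sum_delta (fun _ => (1:R)) u); apply: eq_bigr => i _; rewrite mulr1.
rewrite exchange_big /=; rewrite -(proj2 (Pst x u)); apply: eq_bigr => i _.
by rewrite -mulr_sumr IH mulr1.
Qed.

Lemma ns_le1 k u w : ns k u w <= 1.
Proof.
rewrite -(ns_sum1 k u) (bigD1 w) //= lerDl; apply: sumr_ge0 => i _; exact: ns_ge0.
Qed.

Lemma ns_CK m k u w : ns (m + k) u w = \sum_u' ns m u u' * ns k u' w.
Proof.
elim: m u => [|m IH] u.
  by rewrite add0n /= sum_delta.
rewrite addSn /=.
under eq_bigr do rewrite IH mulr_sumr.
rewrite exchange_big /=; apply: eq_bigr => i _.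
by rewrite mulr_suml; apply: eq_bigr => j _; rewrite mulrA.
Qed.

Lemma ns_abs k e w : e \in E -> ns k e w = (e == w)%:R.
Proof.
move=> eE; elim: k => [|k IH] //=.
under eq_bigr do rewrite P_abs_row //.
by rewrite sum_delta IH.
Qed.

Lemma ns1 u w : ns 1 u w = P x u w.
Proof. by rewrite /= sum_delta_r. Qed.

Definition bb k u := \sum_(w in ~: E) ns k u w.

Lemma bbE k u : bb k u = \sum_w ns k u w * (w \in ~: E)%:R.
Proof.
rewrite /bb big_mkcond /=; apply: eq_bigr => i _.
by case: (i \in ~: E); rewrite ?mulr1 ?mulr0.
Qed.

Lemma bb_ge0 k u : 0 <= bb k u.
Proof. by apply: sumr_ge0 => i _; exact: ns_ge0. Qed.

Lemma bb_le1 k u : bb k u <= 1.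
Proof.
rewrite bbE -[leRHS](ns_sum1 k u); apply: ler_sum => i _.
have := ns_ge0 k u i.
by case: (i \in ~: E); rewrite ?mulr1 ?mulr0.
Qed.

Lemma bb_abs k e : e \in E -> bb k e = 0.
Proof.
move=> eE; rewrite /bb; apply: big1 => i; rewrite finset.in_setC => iE.
rewrite ns_abs //; case: eqP => // ei; by move: iE; rewrite -ei eE.
Qed.

Lemma bb_add m k u : bb (m + k) u = \sum_u' ns m u u' * bb k u'.
Proof.
rewrite /bb; under eq_bigr do rewrite ns_CK.
rewrite exchange_big /=; apply: eq_bigr => i _; by rewrite mulr_sumr.
Qed.

Lemma bb_decay n0 z0 m u : (forall u, bb n0 u <= z0) ->
  bb (m + n0) u <= z0 * bb m u.
Proof.
move=> H; rewrite bb_add bbE mulr_sumr; apply: ler_sum => i _.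
have h0 := ns_ge0 m u i.
case: (boolP (i \in E)) => iE.
  by rewrite bb_abs // finset.in_setC iE /= !mulr0.
by rewrite finset.in_setC iE /= mulr1 mulrC; apply: ler_wpM2r.
Qed.

Lemma ns_mono e n u : e \in E -> ns n u e <= ns n.+1 u e.
Proof.
move=> eE; rewrite -addn1 ns_CK; under eq_bigr do rewrite ns1.
rewrite (bigD1 e) //= Pabs // mulr1 lerDl.
apply: sumr_ge0 => i _; apply: mulr_ge0; first exact: ns_ge0.
by case: (Pst x i) => ->.
Qed.

Lemma ns_upper e n k u : e \in E -> ns (n + k) u e <= ns n u e + bb n u.
Proof.
move=> eE; rewrite ns_CK bbE -[X in X + _](sum_delta_r (ns n u) e) -big_split /=.
apply: ler_sum => i _; rewrite -mulrDr; apply: ler_wpM2l; first exact: ns_ge0.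
case: (boolP (i \in E)) => iE.
  by rewrite ns_abs // finset.in_setC iE /= addr0.
rewrite finset.in_setC iE /=.
have -> : (i == e) = false by apply/negbTE; apply: contraNneq iE => ->.
by rewrite add0r ns_le1.
Qed.

Lemma q_cvg e u : e \in E -> cvgn (fun k => ns k u e).
Proof.
move=> eE; apply: nondecreasing_is_cvgn.
  by apply/nondecreasing_seqP => n; exact: ns_mono.
by exists 1 => _ [k _ <-]; exact: ns_le1.
Qed.

Lemma q_ge e u n : e \in E -> ns n u e <= absorb_prob P x u e.
Proof.
move=> eE; have H : nondecreasing_seq (fun k => ns k u e).
  by apply/nondecreasing_seqP => k; exact: ns_mono.
exact: (nondecreasing_cvgn_le H (@q_cvg e u eE) n).
Qed.

Lemma q_le e u n : e \in E -> absorb_prob P x u e <= ns n u e + bb n u.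
Proof.
move=> eE; rewrite /absorb_prob; apply: limr_le; first exact: q_cvg.
near=> k; have -> : k = (n + (k - n))%N by rewrite subnKC //; near: k; exists n.
exact: ns_upper.
Unshelve. all: by end_near.
Qed.

Lemma ns_muinf n u w : `| ns n u w - mu_infty P E x u w | <= bb n u.
Proof.
rewrite /mu_infty; case: ifP => wE.
  have h1 := @q_ge w u n wE; have h2 := @q_le w u n wE.
  rewrite ler_norml; apply/andP; split; lra.
rewrite subr0 ger0_norm ?ns_ge0 // /bb (bigD1 w) /=; last by rewrite finset.in_setC wE.
by rewrite lerDl; apply: sumr_ge0 => i _; exact: ns_ge0.
Qed.

End Chain.
Unset Implicit Arguments.
Definition pi {R : realType} (n : nat) (z : R) := expR (- z) * (z ^+ n / n`!%:R).

Lemma seriesE_exp {R : realType} (z : R) :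
  series (exp_coeff z) = (fun N => \sum_(n < N) z ^+ n / n`!%:R).
Proof. by apply/funext => N; rewrite /series /= big_mkord. Qed.

Lemma ser_exp_cvg {R : realType} (z : R) :
  (fun N => \sum_(n < N) z ^+ n / n`!%:R) @ \oo --> expR z.
Proof. rewrite -seriesE_exp; exact: is_cvg_series_exp_coeff. Qed.

Lemma ser_exp_le {R : realType} (z : R) N : 0 <= z ->
  \sum_(n < N) z ^+ n / n`!%:R <= expR z.
Proof.
move=> z0; have -> : \sum_(n < N) z ^+ n / n`!%:R = series (exp_coeff z) N.
  by rewrite seriesE_exp.
apply: nondecreasing_cvgn_le; last exact: is_cvg_series_exp_coeff.
rewrite /series /=; apply: nondecreasing_series => n _ _; exact: exp_coeff_ge0.
Qed.

Lemma pi_ge0 {R : realType} n (z : R) : 0 <= z -> 0 <= pi n z.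
Proof. by move=> z0; rewrite /pi mulr_ge0 ?expR_ge0 // divr_ge0 ?exprn_ge0. Qed.

Lemma pi_sum_le1 {R : realType} (z : R) N : 0 <= z -> \sum_(n < N) pi n z <= 1.
Proof.
move=> z0; rewrite /pi -mulr_sumr -[leRHS](mulVf (lt0r_neq0 (expR_gt0 z))) expRN.
by apply: ler_wpM2l; [rewrite invr_ge0 expR_ge0|exact: ser_exp_le].
Qed.

Lemma pi_geo {R : realType} (z r : R) N : 0 <= z -> 0 <= r ->
  \sum_(n < N) pi n z * r ^+ n <= expR (- (z * (1 - r))).
Proof.
move=> z0 r0.
have -> : expR (- (z * (1 - r))) = expR (- z) * expR (z * r).
  by rewrite -expRD; congr expR; ring.
rewrite /pi; under eq_bigr do rewrite -mulrA.
rewrite -mulr_sumr; apply: ler_wpM2l; first exact: expR_ge0.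
have := ser_exp_le (z * r) N (mulr_ge0 z0 r0); apply: le_trans; rewrite le_eqVlt; apply/orP; left.
apply/eqP; apply: eq_bigr => i _; rewrite exprMn; ring.
Qed.

Lemma pi_cvg {R : realType} (z : R) :
  (fun N => \sum_(n < N) pi n z) @ \oo --> (1:R).
Proof.
have -> : (fun N => \sum_(n < N) pi n z) = (fun N => expR (- z) * \sum_(n < N) z ^+ n / n`!%:R).
  by apply/funext => N; rewrite mulr_sumr.
have E1 : expR (- z) * expR z = 1 by rewrite -expRD addNr expR0.
rewrite -[X in _ --> X]E1.
apply: cvgM; [exact: cvg_cst | exact: ser_exp_cvg].
Qed.
Section Intg.
Variable R : realType.
Local Notation mu := (@lebesgue_measure R).

Lemma dg (t x : R) : is_derive x (1:R) (fun s => t - s) (-1).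
Proof.
have H := is_deriveB (is_derive_cst t x 1) (is_derive_id x (1:R)).
rewrite sub0r in H; exact: H.
Qed.

Lemma dF (C t x : R) n :
  is_derive x (1:R) (fun s => - (C / n.+1%:R) * (t - s) ^+ n.+1) (C * (t - x) ^+ n).
Proof.
have H := is_deriveZ (- (C / n.+1%:R)) (is_deriveX n.+1 (dg t x)).
have -> : C * (t - x) ^+ n = - (C / n.+1%:R) *: ((n.+1%:R * (t - x) ^+ n.+1.-1) *: (-1)).
  by rewrite /= /GRing.scale /=; field.
set k := - (C / n.+1%:R).
have -> : (fun s => k * (t - s) ^+ n.+1) = k \*: (fun s => t - s) ^+ n.+1.
  by apply/funext => s /=; rewrite exprfctE.
exact: H.
Qed.

Lemma cont_pow (C t : R) n : continuous (fun s => C * (t - s) ^+ n).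
Proof.
move=> y; apply: differentiable_continuous; rewrite -derivable1_diffP.
have H := is_deriveZ C (is_deriveX n (dg t y)).
have -> : (fun s => C * (t - s) ^+ n) = C \*: (fun s => t - s) ^+ n.
  by apply/funext => s /=; rewrite exprfctE.
exact: (@ex_derive _ _ _ _ _ _ _ H).
Qed.

Lemma int_pow (C t tau : R) n : tau <= t ->
  (\int[mu]_(s in `[tau, t]) (C * (t - s) ^+ n)%:E)%E
   = (C * ((t - tau) ^+ n.+1 / n.+1%:R))%:E.
Proof.
rewrite le_eqVlt => /orP[/eqP ->|lt].
  by rewrite set_itv1 integral_set1 subrr expr0n /= mul0r mulr0.
have cF : continuous (fun s => - (C / n.+1%:R) * (t - s) ^+ n.+1).
  move=> y; apply: differentiable_continuous; rewrite -derivable1_diffP.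
  exact: (@ex_derive _ _ _ _ _ _ _ (dF C t y n)).
rewrite (@continuous_FTC2 R (fun s : R => C * (t - s) ^+ n) (fun s => - (C / n.+1%:R) * (t - s) ^+ n.+1)) //.
- rewrite -EFinB; congr EFin. rewrite subrr expr0n /= mulr0 sub0r; field.
  by apply: lt0r_neq0; have := ler0n R n; lra.
- by apply: continuous_in_subspaceT => y _; exact: cont_pow.
- split.
  + by move=> y _; exact: (@ex_derive _ _ _ _ _ _ _ (dF C t y n)).
  + exact: cvg_at_right_filter (cF tau).
  + exact: cvg_at_left_filter (cF t).
- move=> y _; rewrite derive1E; exact: (@derive_val _ _ _ _ _ _ _ (dF C t y n)).
Qed.

Lemma int_mono (D : set R) (f g : R -> R) : (forall s, D s -> 0 <= f s) ->
  (forall s, D s -> f s <= g s) ->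
  (\int[mu]_(s in D) (f s)%:E <= \int[mu]_(s in D) (g s)%:E)%E.
Proof.
move=> f0 fg.
rewrite ge0_integralE; last by move=> s Ds; rewrite lee_fin f0.
rewrite ge0_integralE; last by move=> s Ds; rewrite lee_fin (le_trans (f0 s Ds) (fg s Ds)).
apply: ereal_sup_le => _ [h hf <-]; exists h => //= y.
apply: le_trans (hf y) _; rewrite /patch; case: ifP => // /[!inE] Dy.
by rewrite lee_fin fg.
Qed.

Lemma Rint_sandwich (A B t tau : R) n (f : R -> R) : tau <= t -> 0 <= A ->
  (forall s, tau <= s <= t -> A * (t - s) ^+ n <= f s /\ f s <= B * (t - s) ^+ n) ->
  A * ((t - tau) ^+ n.+1 / n.+1%:R) <= Rintegral mu `[tau, t] f /\
  Rintegral mu `[tau, t] f <= B * ((t - tau) ^+ n.+1 / n.+1%:R).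
Proof.
move=> tt A0 H.
have D1 s : `[tau, t]%classic s -> tau <= s <= t by rewrite /= in_itv.
have lo0 s : `[tau, t]%classic s -> 0 <= A * (t - s) ^+ n.
  move=> /D1 /andP[_ st]; apply: mulr_ge0 => //; apply: exprn_ge0; lra.
have lo := int_mono _ _ _ lo0 (fun s Ds => proj1 (H s (D1 s Ds))).
have hi := int_mono _ _ _ (fun s Ds => le_trans (lo0 s Ds) (proj1 (H s (D1 s Ds))))
  (fun s Ds => proj2 (H s (D1 s Ds))).
rewrite !int_pow // in lo hi.
rewrite /Rintegral; set I := (\int[mu]_(x in _) _)%E in lo hi *.
have fin : I \is a fin_num.
  rewrite ge0_fin_numE; first exact: le_lt_trans hi (ltry _).
  apply: le_trans lo; rewrite lee_fin; apply: mulr_ge0 => //.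
  by apply: divr_ge0; [apply: exprn_ge0; lra|exact: ler0n].
by move: lo hi; rewrite -(fineK fin) !lee_fin /= => -> ->.
Qed.
End Intg.
Section Flow.
Variables (R : realType) (N : nat) (chi : finType).
Variables (a : 'rV[R]_N -> chi -> 'rV[R]_N) (flow : chi -> R -> 'rV[R]_N -> 'rV[R]_N).
Hypothesis Hder : forall u y (s : R),
  is_derive s (1 : R) (fun r => flow u r y) (a (flow u s y) u).
Hypothesis H0 : forall u y, flow u 0 y = y.

Lemma coord_der u y s (i : 'I_N) :
  is_derive s (1 : R) (fun r => flow u r y ord0 i) (a (flow u s y) u ord0 i).
Proof.
have D := Hder u y s.
have dM := @ex_derive _ _ _ _ _ _ _ D.
have dij := (proj1 (derivable_mxP _ _ _) dM) ord0 i.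
apply: DeriveDef => //.
have := derive_mx dM; rewrite (@derive_val _ _ _ _ _ _ _ D) => E.
by rewrite E mxE.
Qed.

Lemma norm1_triangle (w1 w2 : 'rV[R]_N) : norm1 (w1 + w2) <= norm1 w1 + norm1 w2.
Proof.
rewrite /norm1 -big_split /=; apply: ler_sum => i _; rewrite mxE; exact: ler_normD.
Qed.

Lemma norm1_ge0 (w : 'rV[R]_N) : 0 <= norm1 w.
Proof. by apply: sumr_ge0 => i _. Qed.

Lemma flow_bound (M : R) : (forall v x, norm1 (a x v) <= M) ->
  forall u y r, 0 <= r -> norm1 (flow u r y - y) <= M * r.
Proof.
move=> HM u y r r0.
pose sg i := Num.sg ((flow u r y - y) ord0 i).
pose g := fun s => \sum_(i < N) sg i * flow u s y ord0 i.
pose dg := fun s => \sum_(i < N) sg i * a (flow u s y) u ord0 i.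
have gd s : is_derive s (1:R) g (dg s).
  have H := @is_derive_sum _ _ _ N (fun i s => sg i * flow u s y ord0 i) s 1
    (fun i => sg i * a (flow u s y) u ord0 i)
    (fun i => is_deriveZ (sg i) (coord_der u y s i)).
  have -> : g = \sum_(i < N) (fun s => sg i * flow u s y ord0 i).
    by apply/funext => z; rewrite /g fct_sumE.
  exact: H.
have gc : {within `[0, r], continuous g}.
  apply: continuous_in_subspaceT => z _.
  apply: differentiable_continuous; rewrite -derivable1_diffP.
  exact: (@ex_derive _ _ _ _ _ _ _ (gd z)).
have [c _ Hc] := MVT_segment r0 (fun z _ => gd z) gc.
have -> : norm1 (flow u r y - y) = g r - g 0.
  rewrite /g /= H0 /norm1 -sumrB; apply: eq_bigr => i _.
  by rewrite normrEsg -/(sg i) !mxE mulrBr.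
rewrite Hc subr0; apply: ler_wpM2r => //.
apply: le_trans (HM u (flow u c y)); rewrite /dg /norm1; apply: ler_sum => i _.
rewrite (le_trans (ler_norm _)) // normrM.
have : `|sg i| <= 1 by rewrite /sg normr_sg; case: (_ == 0).
move=> h; rewrite -[leRHS]mul1r; apply: ler_wpM2r => //.
Qed.
End Flow.
Section Main.
Variables (R : realType) (N : nat) (chi : finType).
Variables (a : 'rV[R]_N -> chi -> 'rV[R]_N) (P : 'rV[R]_N -> chi -> chi -> R).
Variables (E : {set chi}) (flow : chi -> R -> 'rV[R]_N -> 'rV[R]_N).
Hypothesis Pst : stochastic P.
Hypothesis Pabs : forall e x, e \in E -> P x e e = 1.
Hypothesis Hder : forall u y (s : R),
  is_derive s (1 : R) (fun r => flow u r y) (a (flow u s y) u).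
Hypothesis H0 : forall u y, flow u 0 y = y.
Variables (M K0 : R).
Hypothesis HM : forall v y, norm1 (a y v) <= M.
Hypothesis M0 : 0 <= M.
Hypothesis K00 : 0 < K0.
Hypothesis HK0 : forall x x' v,
  \sum_(w : chi) `|P x v w - P x' v w| <= K0 * norm1 (x - x').
Variables (x : 'rV[R]_N) (lam t : R) (w : chi).
Hypothesis lam0 : 0 < lam.
Hypothesis t0 : 0 < t.

Local Notation ns := (nstep P x).
Let del := K0 * M * t.
Let del0 : 0 <= del.
Proof. by rewrite /del !mulr_ge0 // ltW. Qed.

Definition cc n u := del * \sum_(k < n) bb P E x k u.
Definition ml n u := Num.max 0 (ns n u w - cc n u).
Definition mh n u := Num.min 1 (ns n u w + cc n u).

Lemma cc_ge0 n u : 0 <= cc n u.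
Proof. by rewrite /cc mulr_ge0 // sumr_ge0 // => k _; apply: bb_ge0. Qed.

Lemma bb0 u : bb P E x 0 u = (u \in ~: E)%:R.
Proof. by rewrite bbE sum_delta. Qed.

Lemma ccS n u : cc n.+1 u = (u \in ~: E)%:R * del + \sum_u' P x u u' * cc n u'.
Proof.
rewrite /cc big_ord_recl bb0 mulrDr mulrC; congr (_ + _).
under eq_bigr => i _ do rewrite lift0 -add1n bb_add.
rewrite mulr_sumr; under eq_bigr do rewrite mulr_sumr.
rewrite exchange_big; apply: eq_bigr => u' _.
rewrite ns1 !mulr_sumr; apply: eq_bigr => k _; ring.
Qed.

Lemma ml_ge0 n u : 0 <= ml n u.
Proof. by rewrite /ml le_max lexx. Qed.
Lemma ml_le1 n u : ml n u <= 1.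
Proof.
rewrite /ml ge_max ler01 /=; have := cc_ge0 n u; have := ns_le1 Pst x n u w; lra.
Qed.
Lemma mh_ge0 n u : 0 <= mh n u.
Proof.
rewrite /mh le_min ler01 /=; have := cc_ge0 n u; have := ns_ge0 Pst x n u w; lra.
Qed.
Lemma mh_le1 n u : mh n u <= 1.
Proof. by rewrite /mh ge_min lexx. Qed.

Lemma KD y' u (g : chi -> R) : norm1 (y' - x) <= M * t ->
  (forall u', 0 <= g u' <= 1) ->
  `|\sum_u' P y' u u' * g u' - \sum_u' P x u u' * g u'| <= (u \in ~: E)%:R * del.
Proof.
move=> Hy Hg; case: (boolP (u \in E)) => uE.
  have -> : \sum_u' P y' u u' * g u' = \sum_u' P x u u' * g u'.
    by apply: eq_bigr => i _; rewrite !(P_abs_row Pst Pabs) .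
  by rewrite subrr normr0 finset.in_setC uE /= mul0r.
rewrite finset.in_setC uE /= mul1r -sumrB.
apply: le_trans (ler_norm_sum _ _ _) _.
apply: le_trans (_ : \sum_u' `|P y' u u' - P x u u'| <= _).
  apply: ler_sum => i _; rewrite -mulrBl normrM.
  have /andP[g0 g1] := Hg i.
  rewrite -[leRHS]mulr1 ler_wpM2l // ger0_norm //.
apply: le_trans (HK0 y' x u) _.
by rewrite /del -mulrA ler_wpM2l // ltW.
Qed.

Lemma nsS n u : ns n.+1 u w = \sum_u' P x u u' * ns n u' w.
Proof. by []. Qed.

Lemma ml_step n y' u : norm1 (y' - x) <= M * t ->
  ml n.+1 u <= \sum_u' P y' u u' * ml n u'.
Proof.
move=> Hy; rewrite /ml ge_max; apply/andP; split.
  apply: sumr_ge0 => i _; apply: mulr_ge0; [by case: (Pst y' u) => ->|exact: ml_ge0].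
have H := KD y' u (ml n) Hy (fun v => introT andP (conj (ml_ge0 n v) (ml_le1 n v))).
have H2 : \sum_u' P x u u' * ns n u' w - \sum_u' P x u u' * cc n u' <= \sum_u' P x u u' * ml n u'.
  rewrite -sumrB; apply: ler_sum => i _.
  rewrite -mulrBr; apply: ler_wpM2l; first by case: (Pst x u) => ->.
  by rewrite le_max lexx orbT.
have := nsS n u; have := ccS n u.
move: H; rewrite ler_norml => /andP[H1 _]; lra.
Qed.

Lemma mh_step n y' u : norm1 (y' - x) <= M * t ->
  \sum_u' P y' u u' * mh n u' <= mh n.+1 u.
Proof.
move=> Hy.
have A1 : \sum_u' P y' u u' * mh n u' <= 1.
  rewrite -[leRHS](proj2 (Pst y' u)); apply: ler_sum => i _.
  rewrite -[leRHS]mulr1; apply: ler_wpM2l; [by case: (Pst y' u) => ->|exact: mh_le1].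
rewrite [mh n.+1 u]/mh le_min A1 /=.
have H := KD y' u (mh n) Hy (fun v => introT andP (conj (mh_ge0 n v) (mh_le1 n v))).
have H2 : \sum_u' P x u u' * mh n u' <= \sum_u' P x u u' * ns n u' w + \sum_u' P x u u' * cc n u'.
  rewrite -big_split /=; apply: ler_sum => i _.
  rewrite -mulrDr; apply: ler_wpM2l; first by case: (Pst x u) => ->.
  by rewrite ge_min lexx orbT.
have := nsS n u; have := ccS n u.
move: H; rewrite ler_norml => /andP[_ H1]; lra.
Qed.


Lemma pt_S n tau y u : path_term P flow lam t w n.+1 tau y u =
  Rintegral lebesgue_measure `[tau, t] (fun s => lam * expR (- lam * (s - tau)) *
    \sum_(u' : chi) P (flow u (s - tau) y) u u' *
      path_term P flow lam t w n s (flow u (s - tau) y) u').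
Proof. by []. Qed.

Lemma fact_exp n s tau : lam * expR (- lam * (s - tau)) * pi n (lam * (t - s)) =
  (lam ^+ n.+1 * expR (- (lam * (t - tau))) / n`!%:R) * (t - s) ^+ n.
Proof.
have E1 : expR (- lam * (s - tau)) * expR (- (lam * (t - s))) = expR (- (lam * (t - tau))).
  by rewrite -expRD; congr expR; ring.
rewrite /pi exprMn -E1 exprS; ring.
Qed.

Lemma piS_eq n tau m : pi n.+1 (lam * (t - tau)) * m =
  (lam ^+ n.+1 * expR (- (lam * (t - tau))) / n`!%:R) * m * ((t - tau) ^+ n.+1 / n.+1%:R).
Proof.
rewrite /pi factS natrM exprMn; field.
rewrite pnatr_eq0 -lt0n fact_gt0 andbT; apply: lt0r_neq0; have := ler0n R n; lra.
Qed.

Lemma pt_bounds n : forall tau y u, 0 <= tau <= t -> norm1 (y - x) <= M * tau ->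
  pi n (lam * (t - tau)) * ml n u <= path_term P flow lam t w n tau y u <=
  pi n (lam * (t - tau)) * mh n u.
Proof.
elim: n => [|n IH] tau y u /andP[tau0 taut] Hy.
  rewrite /= /ml /mh /cc big_ord0 mulr0 !subr0 !addr0 /pi expr0 fact0 divr1 mulr1 mulNr.
  have -> : Num.max 0 (u == w)%:R = (u == w)%:R :> R.
    by case: (u == w); rewrite ?max_r ?max_l ?ler01 ?lexx.
  have -> : Num.min 1 (u == w)%:R = (u == w)%:R :> R.
    by case: (u == w); rewrite ?min_r ?min_l ?ler01 ?lexx.
  by rewrite lexx.
rewrite pt_S.
set Kc := lam ^+ n.+1 * expR (- (lam * (t - tau))) / n`!%:R.
have Kc0 : 0 <= Kc.
  by rewrite /Kc mulr_ge0 ?invr_ge0 ?ler0n // mulr_ge0 ?exprn_ge0 ?expR_ge0 // ltW.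
have PW : forall s, tau <= s <= t ->
    Kc * ml n.+1 u * (t - s) ^+ n <= lam * expR (- lam * (s - tau)) *
      \sum_(u' : chi) P (flow u (s - tau) y) u u' *
      path_term P flow lam t w n s (flow u (s - tau) y) u' /\
    lam * expR (- lam * (s - tau)) *
      \sum_(u' : chi) P (flow u (s - tau) y) u u' *
      path_term P flow lam t w n s (flow u (s - tau) y) u' <= Kc * mh n.+1 u * (t - s) ^+ n.
  move=> s /andP[taus st].
  set ys := flow u (s - tau) y.
  have Hys : norm1 (ys - x) <= M * s.
    have st0 : 0 <= s - tau by rewrite subr_ge0.
    have F := @flow_bound R N chi a flow Hder H0 M HM u y (s - tau) st0.
    have -> : ys - x = (ys - y) + (y - x) by rewrite addrA subrK.
    apply: le_trans (norm1_triangle _ _ _ _) _.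
    move: F; rewrite mulrBr -/ys => F; lra.
  have Hyst : norm1 (ys - x) <= M * t by apply: le_trans Hys _; apply: ler_wpM2l.
  have IHs u' := IH s ys u' (introT andP (conj (le_trans tau0 taus) st)) Hys.
  have L0 : 0 <= lam * expR (- lam * (s - tau)) by rewrite mulr_ge0 ?expR_ge0 // ltW.
  have piN0 : 0 <= pi n (lam * (t - s)) by apply: pi_ge0; rewrite mulr_ge0 ?subr_ge0 // ltW.
  have E2 m : Kc * m * (t - s) ^+ n = lam * expR (- lam * (s - tau)) * (pi n (lam * (t - s)) * m).
    by rewrite mulrA fact_exp /Kc; ring.
  rewrite !E2; split; apply: ler_wpM2l => //.
    apply: le_trans (_ : pi n (lam * (t - s)) * \sum_u' P ys u u' * ml n u' <= _).
      by apply: ler_wpM2l => //; exact: ml_step.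
    rewrite mulr_sumr; apply: ler_sum => i _; rewrite mulrCA; apply: ler_wpM2l.
      by case: (Pst ys u) => ->.
    by case/andP: (IHs i).
  apply: le_trans (_ : pi n (lam * (t - s)) * \sum_u' P ys u u' * mh n u' <= _); last first.
    by apply: ler_wpM2l => //; exact: mh_step.
  rewrite mulr_sumr; apply: ler_sum => i _; rewrite mulrCA; apply: ler_wpM2l.
    by case: (Pst ys u) => ->.
  by case/andP: (IHs i).
have [lo hi] := Rint_sandwich _ (Kc * ml n.+1 u) (Kc * mh n.+1 u) t tau n _ taut
  (mulr_ge0 Kc0 (ml_ge0 _ _)) PW.
by rewrite !piS_eq -/Kc lo hi.
Qed.


Lemma geo_le (rho : R) n : 0 <= rho < 1 -> \sum_(k < n) rho ^+ k <= (1 - rho)^-1.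
Proof.
move=> /andP[r0 r1].
have ne : 1 - rho != 0 by apply: lt0r_neq0; lra.
have HS : (1 - rho) * \sum_(k < n) rho ^+ k = 1 - rho ^+ n.
  by have h := subrX1 rho n; rewrite -opprB mulNr -h opprB.
rewrite -[X in X <= _](mulKf ne) HS; rewrite -[leRHS]mulr1; apply: ler_wpM2l.
  by rewrite invr_ge0; lra.
by have := exprn_ge0 n r0; lra.
Qed.

Lemma norm1_0 : norm1 (0 : 'rV[R]_N) = 0.
Proof. by rewrite /norm1 big1 // => i _; rewrite mxE normr0. Qed.

Lemma mu_close (rho Cb : R) : 0 <= rho < 1 -> 0 <= Cb ->
  (forall n v, bb P E x n v <= Cb * rho ^+ n) -> forall v,
  `|mu_t P flow lam t x v w - mu_infty P E x v w| <=
    del * Cb / (1 - rho) + Cb * expR (- (lam * t * (1 - rho))).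
Proof.
move=> /andP[r0 r1] Cb0 Hbb v.
set z := lam * t.
have z0 : 0 <= z by rewrite mulr_ge0 // ltW.
set q := mu_infty P E x v w.
set D := del * Cb / (1 - rho).
have D0 : 0 <= D by apply: mulr_ge0; [exact: mulr_ge0|rewrite invr_ge0; lra].
set eps := D + Cb * expR (- (z * (1 - rho))).
have pt0 n : pi n z * ml n v <= path_term P flow lam t w n 0 x v <= pi n z * mh n v.
  have := pt_bounds n 0 x v (introT andP (conj (lexx 0) (ltW t0))).
  by rewrite subrr norm1_0 mulr0 subr0 lexx => /(_ isT).
have pige n : 0 <= pi n z by exact: pi_ge0.
have ccD n : cc n v <= D.
  rewrite /cc /D -mulrA ler_wpM2l //.
  apply: le_trans (_ : \sum_(k < n) Cb * rho ^+ k <= _).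
    by apply: ler_sum => k _; exact: Hbb.
  by rewrite -mulr_sumr ler_wpM2l // geo_le // r0 r1.
have err n : `|path_term P flow lam t w n 0 x v - pi n z * q| <= pi n z * (D + Cb * rho ^+ n).
  have hq := ns_muinf Pst Pabs x n v w; rewrite -/q in hq.
  have hb := Hbb n v; have hc := ccD n; have hc0 := cc_ge0 n v.
  move: hq; rewrite ler_norml => /andP[hq1 hq2].
  have A : pi n z * (q - (D + Cb * rho ^+ n)) <= pi n z * ml n v.
    apply: ler_wpM2l => //; rewrite /ml le_max; apply/orP; right; lra.
  have B : pi n z * mh n v <= pi n z * (q + (D + Cb * rho ^+ n)).
    apply: ler_wpM2l => //; rewrite /mh ge_min; apply/orP; right; lra.
  have /andP[C1 C2] := pt0 n.
  move: A B; rewrite mulrBr mulrDr => A B.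
  rewrite ler_norml; apply/andP; split; lra.
have bnd NN : `|\sum_(n < NN) path_term P flow lam t w n 0 x v - q * \sum_(n < NN) pi n z| <= eps.
  rewrite mulr_sumr -sumrB; apply: (le_trans (ler_norm_sum _ _ _)).
  apply: (le_trans (y := \sum_(n < NN) pi n z * (D + Cb * rho ^+ n))).
    by apply: ler_sum => n _; rewrite mulrC; exact: err.
  under eq_bigr do rewrite mulrDr.
  rewrite big_split /= /eps; apply: lerD.
    under eq_bigr do rewrite mulrC.
    rewrite -mulr_sumr -[leRHS]mulr1 ler_wpM2l //; exact: pi_sum_le1.
  under eq_bigr do rewrite mulrCA.
  rewrite -mulr_sumr ler_wpM2l //; exact: pi_geo.
have ptge0 n : 0 <= path_term P flow lam t w n 0 x v.
  have /andP[C1 _] := pt0 n; apply: le_trans C1; exact: mulr_ge0 (pige n) (ml_ge0 n v).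
have ptle n : path_term P flow lam t w n 0 x v <= pi n z.
  have /andP[_ C2] := pt0 n; apply: le_trans C2 _.
  by rewrite -[leRHS]mulr1 ler_wpM2l // mh_le1.
set S := series (fun n => path_term P flow lam t w n 0 x v).
have SE NN : S NN = \sum_(n < NN) path_term P flow lam t w n 0 x v.
  by rewrite /S /series /= big_mkord.
have cS : cvgn S.
  apply: nondecreasing_is_cvgn.
    by apply: nondecreasing_series => n _ _; exact: ptge0.
  exists 1 => _ [NN _ <-]; rewrite SE; apply: le_trans (pi_sum_le1 z NN z0).
  by apply: ler_sum => n _; exact: ptle.
set T := fun NN => q * \sum_(n < NN) pi n z.
have cT : T @ \oo --> q.
  rewrite -[X in _ --> X]mulr1; apply: cvgM; [exact: cvg_cst|exact: pi_cvg].
have cST : (S - T) @ \oo --> limn S - q by apply: cvgB.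
have EL : limn (S - T) = limn S - q by apply: cvg_lim.
have H1 : limn (S - T) <= eps.
  apply: limr_le; first by apply/cvg_ex; exists (limn S - q).
  near=> NN; have := bnd NN; rewrite -SE ler_norml => /andP[_ h]; exact: h.
have H2 : - eps <= limn (S - T).
  apply: limr_ge; first by apply/cvg_ex; exists (limn S - q).
  near=> NN; have := bnd NN; rewrite -SE ler_norml => /andP[h _]; exact: h.
rewrite /mu_t -/S ler_norml; rewrite EL in H1 H2.
by rewrite H1 H2.
Unshelve. all: by end_near.
Qed.

End Main.
From mathcomp Require Import zify.

Lemma bern (R : realType) (h : R) n : 0 <= h <= 1 -> 1 - n%:R * h <= (1 - h) ^+ n.
Proof.
move=> /andP[h0 h1]; elim: n => [|n IH]; first by rewrite mul0r subr0 expr0.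
rewrite exprS -natr1.
have H : (1 - h) * (1 - n%:R * h) <= (1 - h) * (1 - h) ^+ n.
  by apply: ler_wpM2l => //; lra.
have := ler0n R n; move=> n0.
have : 0 <= n%:R * h * h by rewrite !mulr_ge0.
nra.
Qed.

Lemma bb_geo (R : realType) (N : nat) (chi : finType) (P : 'rV[R]_N -> chi -> chi -> R)
  (E : {set chi}) (x : 'rV[R]_N) (n0 : nat) (z1 rho : R) :
  stochastic P -> (forall e x, e \in E -> P x e e = 1) ->
  (1 <= n0)%N -> 0 <= z1 -> z1 <= rho ^+ n0 -> 0 < rho -> rho <= 1 ->
  (forall u, bb P E x n0 u <= z1) ->
  forall n v, bb P E x n v <= (rho ^+ n0)^-1 * rho ^+ n.
Proof.
move=> Pst Pabs n01 z10 zr r0 r1 Hz.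
have rn0 : 0 < rho ^+ n0 by exact: exprn_gt0.
have ne : rho ^+ n0 != 0 by exact: lt0r_neq0.
elim/ltn_ind => n IH v.
case: (ltnP n n0) => hn.
  apply: le_trans (bb_le1 E Pst x n v) _.
  rewrite -(mulVf ne); apply: ler_wpM2l; first by rewrite invr_ge0 ltW.
  by apply: ler_wiXn2l => //; [exact: ltW|exact: ltnW].
have -> : n = ((n - n0) + n0)%N by rewrite subnK.
apply: le_trans (bb_decay Pst Pabs (n - n0) v Hz) _.
have IH' := IH (n - n0)%N ltac:(lia) v.
apply: le_trans (_ : z1 * ((rho ^+ n0)^-1 * rho ^+ (n - n0)) <= _).
  by apply: ler_wpM2l.
rewrite exprD mulrCA; apply: ler_wpM2l; first by rewrite invr_ge0 ltW.
rewrite [X in _ <= X]mulrC; apply: ler_wpM2r => //; exact: exprn_ge0 (ltW r0).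
Qed.

Theorem mainTheorem5 (R : realType) (N : nat) (chi : finType)
  (a : 'rV[R]_N -> chi -> 'rV[R]_N)
  (P : 'rV[R]_N -> chi -> chi -> R)
  (E : {set chi})
  (flow : chi -> R -> 'rV[R]_N -> 'rV[R]_N) :
  (* assumptions on a: continuous, bounded, globally Lipschitz *)
  (forall v, continuous (fun x => a x v)) ->
  (forall v, exists M : R, forall x, norm1 (a x v) <= M) ->
  (exists L : R, forall v x y, norm1 (a x v - a y v) <= L * norm1 (x - y)) ->
  (* flow u s y solves d/ds X_s = a(X_s, u), X_0 = y *)
  (forall u y, flow u 0 y = y) ->
  (forall u y (s : R), is_derive s (1 : R) (fun r => flow u r y) (a (flow u s y) u)) ->
  (* (i) *)
  stochastic P ->
  (* (ii) *)
  (forall e x, e \in E -> P x e e = 1) ->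
  (* (iii) *)
  (exists (n0 : nat) (z0 : R), (1 <= n0)%N /\ z0 < 1 /\
     forall x v, \sum_(w in ~: E) nstep P x n0 v w <= z0) ->
  (* (iv) *)
  (exists K0 : R, 0 < K0 /\ forall x x' v,
     \sum_(w : chi) `|P x v w - P x' v w| <= K0 * norm1 (x - x')) ->
  exists K c1 : R, 0 < K /\ 0 < c1 /\
    forall (x : 'rV[R]_N) (v : chi) (lam t : R), 0 < lam -> 0 < t ->
      TV_dist (mu_t P flow lam t x v) (mu_infty P E x v)
        <= K * expR (- c1 * t * lam) + K * t.
Proof.
move=> _ HMa _ H0 Hder Pst Pabs [n0 [z0 [n01 [z01 Hz]]]] [K0 [K00 HK0]].
have [Mf HMf] := fin_all_exists HMa.
set M := \sum_v `|Mf v|.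
have M0 : 0 <= M by apply: sumr_ge0 => v _.
have HM : forall v y, norm1 (a y v) <= M.
  move=> v y; apply: le_trans (HMf v y) _; apply: le_trans (ler_norm _) _.
  by rewrite /M (bigD1 v) //= lerDl sumr_ge0.
set z1 := Num.max z0 (2^-1).
have z1h : 2^-1 <= z1 by rewrite /z1 le_max lexx orbT.
have z1l : z1 < 1 by rewrite /z1 gt_max z01 /= invf_lt1 // ltr1n.
have z10 : 0 <= z1 by apply: le_trans z1h; rewrite invr_ge0 ler0n.
have n0pos : 0 < n0%:R :> R by rewrite ltr0n.
set h := (1 - z1) / n0%:R.
have hpos : 0 < h by rewrite /h divr_gt0 // subr_gt0.
have hle : h <= 1 - z1.
  rewrite /h -[leRHS]mulr1; apply: ler_wpM2l; first by rewrite subr_ge0 ltW.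
  by rewrite invf_le1 // ler1n.
set rho := 1 - h.
have r0 : 0 < rho by rewrite /rho; lra.
have r1 : rho < 1 by rewrite /rho; lra.
have zr : z1 <= rho ^+ n0.
  have h1 : h <= 1 by lra.
  have := bern R h n0 (introT andP (conj (ltW hpos) h1)).
  have -> : n0%:R * h = 1 - z1 by rewrite /h mulrC divfK // lt0r_neq0.
  rewrite /rho; lra.
set Cb := (rho ^+ n0)^-1.
have Cb0 : 0 <= Cb by rewrite /Cb invr_ge0 exprn_ge0 // ltW.
set A := K0 * M * Cb / (1 - rho).
have A0 : 0 <= A.
  apply: mulr_ge0; last by rewrite invr_ge0 subr_ge0 ltW.
  by rewrite !mulr_ge0 // ltW.
set n := #|chi|%:R : R.
have nn0 : 0 <= n by rewrite /n ler0n.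
set K := n * (A + Cb) + 1.
exists K, (1 - rho); split; first by rewrite /K; have := mulr_ge0 nn0 (addr_ge0 A0 Cb0); lra.
split; first by rewrite subr_gt0.
move=> x v lam t lam0 t0.
have Hbb : forall k u, bb P E x k u <= Cb * rho ^+ k.
  apply: (bb_geo _ _ _ P E x n0 z1 rho Pst Pabs n01 z10 zr r0 (ltW r1)) => u.
  apply: le_trans (Hz x u) _; rewrite /z1 le_max lexx //.
have each w := @mu_close R N chi a P E flow Pst Pabs Hder H0 M K0 HM M0 K00 HK0 x lam t w lam0 t0
  rho Cb (introT andP (conj (ltW r0) r1)) Cb0 Hbb v.
rewrite /TV_dist.
apply: le_trans (ler_sum _ (fun w _ => each w)) _.
rewrite sumr_const -mulr_natr -/n.
set e := expR (- (lam * t * (1 - rho))).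
have -> : expR (- (1 - rho) * t * lam) = e by rewrite /e; congr expR; ring.
have -> : K0 * M * t * Cb / (1 - rho) = A * t by rewrite /A; ring.
have e0 : 0 <= e by exact: expR_ge0.
have k1 : n * A <= K by rewrite /K; have := mulr_ge0 nn0 Cb0; have := mulr_ge0 nn0 A0; lra.
have k2 : n * Cb <= K by rewrite /K; have := mulr_ge0 nn0 Cb0; have := mulr_ge0 nn0 A0; lra.
rewrite mulrDl addrC; apply: lerD.
  rewrite mulrAC mulrC [leRHS]mulrC; apply: ler_wpM2l => //; by rewrite mulrC.
rewrite mulrAC; apply: ler_wpM2r; [exact: ltW|by rewrite mulrC].
Qed.
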